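(* Let $\lambda\in\mathbb{C}$ with $|\lambda|>1$, and let $g,h\in \mathrm{SL}(2,\mathbb{C})$ be $$g=\begin{pmatrix}\lambda&0\\0&\lambda^{-1}\end{pmatrix},\qquad h=\begin{pmatrix}a&b\\c&d\end{pmatrix}.$$ Put $M_g=|\lambda-1|+|\lambda^{-1}-1|$ and suppose $M_g<1$. If the subgroup $\langle g,h\rangle$ is discrete and non-elementary, then each of the following strict inequalities holds: $$|bc|^{1/2}>\frac{1-M_g}{M_g},\qquad |1+bc|^{1/2}>\frac{1-M_g}{M_g},\qquad |1+bc|+|bc|>\frac{2(1-M_g)}{M_g^2}.$$
   Context: A subgroup of $\mathrm{SL}(2,\mathbb{C})$ is discrete if it is discrete in the matrix topology. It is elementary if its action on $\mathbb{H}^3\cup\partial\mathbb{H}^3$ (via Möbius transformations) has a finite orbit; otherwise it is non-elementary. Since $|\lambda|>1$, $g$ is loxodromic. *)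

(* Defs.v *)
From Stdlib Require Import Reals List.
Open Scope R_scope.

Record Cx := mkCx { re : R; im : R }.

Definition Cadd (x y : Cx) : Cx := mkCx (re x + re y) (im x + im y).
Definition Cneg (x : Cx) : Cx := mkCx (- re x) (- im x).
Definition Csub (x y : Cx) : Cx := Cadd x (Cneg y).
Definition Cmul (x y : Cx) : Cx :=
  mkCx (re x * re y - im x * im y) (re x * im y + im x * re y).
Definition Cconj (x : Cx) : Cx := mkCx (re x) (- im x).
Definition Cnorm2 (x : Cx) : R := re x * re x + im x * im x.
Definition Cnorm (x : Cx) : R := sqrt (Cnorm2 x).
Definition Cinv (x : Cx) : Cx := mkCx (re x / Cnorm2 x) (- im x / Cnorm2 x).
Definition CofR (r : R) : Cx := mkCx r 0.
Definition Czero : Cx := CofR 0.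
Definition Cone : Cx := CofR 1.
Definition Cscale (r : R) (x : Cx) : Cx := mkCx (r * re x) (r * im x).

Record M2 := mkM2 { m11 : Cx; m12 : Cx; m21 : Cx; m22 : Cx }.

Definition mmul (A B : M2) : M2 :=
  mkM2 (Cadd (Cmul (m11 A) (m11 B)) (Cmul (m12 A) (m21 B)))
       (Cadd (Cmul (m11 A) (m12 B)) (Cmul (m12 A) (m22 B)))
       (Cadd (Cmul (m21 A) (m11 B)) (Cmul (m22 A) (m21 B)))
       (Cadd (Cmul (m21 A) (m12 B)) (Cmul (m22 A) (m22 B))).
Definition mdet (A : M2) : Cx := Csub (Cmul (m11 A) (m22 A)) (Cmul (m12 A) (m21 A)).
(* inverse of an SL(2,C) matrix (adjugate) *)
Definition minv (A : M2) : M2 :=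
  mkM2 (m22 A) (Cneg (m12 A)) (Cneg (m21 A)) (m11 A).
Definition mid : M2 := mkM2 Cone Czero Czero Cone.

(* distance inducing the matrix topology on M_2(C) *)
Definition mdist (A B : M2) : R :=
  Cnorm (Csub (m11 A) (m11 B)) + Cnorm (Csub (m12 A) (m12 B))
  + Cnorm (Csub (m21 A) (m21 B)) + Cnorm (Csub (m22 A) (m22 B)).

Inductive gen (g h : M2) : M2 -> Prop :=
| gen_id : gen g h mid
| gen_g : gen g h g
| gen_h : gen g h h
| gen_inv : forall x, gen g h x -> gen g h (minv x)
| gen_mul : forall x y, gen g h x -> gen g h y -> gen g h (mmul x y).

Definition discrete (S : M2 -> Prop) : Prop :=
  forall x, S x -> exists eps, 0 < eps /\
    forall y, S y -> mdist x y < eps -> y = x.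

(* upper half-space model: PFin z t with t > 0 is a point of H^3,
   PFin z 0 is the boundary point z in C, PInf is the boundary point ∞ *)
Inductive P3 := PInf : P3 | PFin : Cx -> R -> P3.

Definition validP (p : P3) : Prop :=
  match p with PInf => True | PFin _ t => 0 <= t end.

(* Poincaré extension of the Möbius transformation of A in SL(2,C) *)
Definition act (A : M2) (p : P3) : P3 :=
  let a := m11 A in let b := m12 A in let c := m21 A in let d := m22 A in
  match p with
  | PInf => if Req_dec_T (Cnorm2 c) 0 then PInf else PFin (Cmul a (Cinv c)) 0
  | PFin z t =>
      let w := Cadd (Cmul c z) d in
      let D := Cnorm2 w + Cnorm2 c * (t * t) in
      if Req_dec_T D 0 then PInf
      else PFin (Cscale (/ D) (Cadd (Cmul (Cadd (Cmul a z) b) (Cconj w))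
                                    (Cscale (t * t) (Cmul a (Cconj c)))))
                (t / D)
  end.

Definition elementary (S : M2 -> Prop) : Prop :=
  exists p, validP p /\ exists l : list P3, forall A, S A -> In (act A p) l.

(* Main.v *)
Require Import Defs.
From Stdlib Require Import Reals List Lra Psatz.
From Coquelicot Require Complex.
Open Scope R_scope.


Lemma Cx_eq (x y : Cx) : re x = re y -> im x = im y -> x = y.
Proof. destruct x, y; simpl; intros; subst; reflexivity. Qed.

Definition Cx_ring : ring_theory Czero Cone Cadd Cmul Csub Cneg (@eq Cx).
Proof.
  constructor; intros; apply Cx_eq; unfold Cadd, Cmul, Csub, Cneg, Czero, Cone, CofR; simpl; ring.
Qed.
Add Ring CxRing : Cx_ring.

Definition toC (x : Cx) : Complex.C := (re x, im x).
Lemma Cnorm_Cmod x : Cnorm x = Complex.Cmod (toC x).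
Proof. unfold Cnorm, Complex.Cmod, Cnorm2, toC; simpl. f_equal. ring. Qed.

Lemma Cnorm_ge0 x : 0 <= Cnorm x.
Proof. rewrite Cnorm_Cmod; apply Complex.Cmod_ge_0. Qed.

Lemma Cnorm_mul x y : Cnorm (Cmul x y) = Cnorm x * Cnorm y.
Proof. rewrite !Cnorm_Cmod, <- Complex.Cmod_mult. reflexivity. Qed.

Lemma Cnorm_add x y : Cnorm (Cadd x y) <= Cnorm x + Cnorm y.
Proof. rewrite !Cnorm_Cmod. exact (Complex.Cmod_triangle (toC x) (toC y)). Qed.

Lemma Cnorm_neg x : Cnorm (Cneg x) = Cnorm x.
Proof. rewrite !Cnorm_Cmod. unfold toC; simpl. apply (Complex.Cmod_opp (re x, im x)). Qed.

Lemma Cnorm_sub x y : Cnorm (Csub x y) <= Cnorm x + Cnorm y.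
Proof. unfold Csub. rewrite <- (Cnorm_neg y). apply Cnorm_add. Qed.

Lemma Cnorm_one : Cnorm Cone = 1.
Proof. unfold Cnorm, Cnorm2; simpl. replace (1*1+0*0) with 1 by ring. apply sqrt_1. Qed.

Lemma Cnorm_zero : Cnorm Czero = 0.
Proof. unfold Cnorm, Cnorm2; simpl. replace (0*0+0*0) with 0 by ring. apply sqrt_0. Qed.

Lemma Cnorm_eq0 x : Cnorm x = 0 -> x = Czero.
Proof. rewrite Cnorm_Cmod. intro H. apply Complex.Cmod_eq_0 in H. unfold toC in H.
  injection H; intros; apply Cx_eq; simpl; auto. Qed.

Lemma Cnorm2_pos x : x <> Czero -> 0 < Cnorm2 x.
Proof. intro H. unfold Cnorm2. destruct (Req_dec (re x) 0); destruct (Req_dec (im x) 0).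
  - exfalso; apply H; apply Cx_eq; simpl; auto.
  - nra. - nra. - nra. Qed.

Lemma Cmul_inv x : x <> Czero -> Cmul x (Cinv x) = Cone.
Proof. intro H. pose proof (Cnorm2_pos x H). unfold Cnorm2 in *.
  apply Cx_eq; unfold Cmul, Cinv, Cone, CofR, Cnorm2; simpl; field; lra. Qed.

Lemma Cnorm_inv x : x <> Czero -> Cnorm (Cinv x) = / Cnorm x.
Proof. intro H. assert (Cnorm x <> 0) by (intro E; apply H, Cnorm_eq0, E).
  assert (E : Cnorm x * Cnorm (Cinv x) = 1) by (rewrite <- Cnorm_mul, Cmul_inv, Cnorm_one; auto).
  field_simplify_eq; auto. rewrite Rmult_comm; auto. Qed.

Lemma Cmul_eq0 x y : Cmul x y = Czero -> x = Czero \/ y = Czero.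
Proof. intro H. assert (Cnorm x * Cnorm y = 0) by (rewrite <- Cnorm_mul, H; apply Cnorm_zero).
  apply Rmult_integral in H0. destruct H0; [left|right]; apply Cnorm_eq0; auto. Qed.

Lemma Cnorm_pos x : x <> Czero -> 0 < Cnorm x.
Proof. intro H; destruct (Cnorm_ge0 x); auto. exfalso; apply H, Cnorm_eq0; auto. Qed.


Lemma M2_eq (A B : M2) : m11 A = m11 B -> m12 A = m12 B -> m21 A = m21 B -> m22 A = m22 B -> A = B.
Proof. destruct A, B; simpl; intros; subst; reflexivity. Qed.

Definition gM (lam : Cx) := mkM2 lam Czero Czero (Cinv lam).
Definition F (lam : Cx) (k : M2) := mmul (mmul k (gM lam)) (minv k).

Section S.
Variable lam : Cx.
Hypothesis Hl : Cmul lam (Cinv lam) = Cone.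
Let nu := Csub lam (Cinv lam).

Lemma F11 k : mdet k = Cone -> m11 (F lam k) = Cadd lam (Cmul (Cmul (m12 k) (m21 k)) nu).
Proof. destruct k as [a b c d]; unfold F, mdet, nu; simpl; intro H.
  transitivity (Cadd (Cadd lam (Cmul (Cmul b c) (Csub lam (Cinv lam)))) (Cmul lam (Csub (Csub (Cmul a d) (Cmul b c)) Cone))).
  ring. rewrite H. ring. Qed.
Lemma F22 k : mdet k = Cone -> m22 (F lam k) = Csub (Cinv lam) (Cmul (Cmul (m12 k) (m21 k)) nu).
Proof. destruct k as [a b c d]; unfold F, mdet, nu; simpl; intro H.
  transitivity (Cadd (Csub (Cinv lam) (Cmul (Cmul b c) (Csub lam (Cinv lam)))) (Cmul (Cinv lam) (Csub (Csub (Cmul a d) (Cmul b c)) Cone))).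
  ring. rewrite H. ring. Qed.
Lemma F12 k : m12 (F lam k) = Cneg (Cmul (Cmul (m11 k) (m12 k)) nu).
Proof. destruct k as [a b c d]; unfold F, nu; simpl; ring. Qed.
Lemma F21 k : m21 (F lam k) = Cmul (Cmul (m21 k) (m22 k)) nu.
Proof. destruct k as [a b c d]; unfold F, nu; simpl; ring. Qed.
Lemma Fdet k : mdet k = Cone -> mdet (F lam k) = Cone.
Proof. destruct k as [a b c d]; unfold F, mdet; simpl; intro H.
  transitivity (Cmul (Cmul (Csub (Cmul a d) (Cmul b c)) (Csub (Cmul a d) (Cmul b c))) (Cmul lam (Cinv lam))).
  ring. rewrite H, Hl. ring. Qed.
Lemma Fp k : mdet k = Cone -> Cmul (m12 (F lam k)) (m21 (F lam k)) =
   Cneg (Cmul (Cmul (Cmul (m12 k) (m21 k)) (Cadd Cone (Cmul (m12 k) (m21 k)))) (Cmul nu nu)).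
Proof. rewrite F12, F21. destruct k as [a b c d]; unfold mdet; simpl; intro H.
  transitivity (Cneg (Cmul (Cmul (Cmul b c) (Cadd (Csub (Cmul a d) (Cmul b c)) (Cmul b c))) (Cmul nu nu))).
  ring. rewrite H. ring. Qed.
Lemma Ftr k : mdet k = Cone -> Cadd (m11 (F lam k)) (m22 (F lam k)) = Cadd lam (Cinv lam).
Proof. intro H; rewrite F11, F22 by auto. ring. Qed.
End S.


Lemma Cone_neq0 : Cone <> Czero.
Proof. intro H. assert (re Cone = re Czero) by (rewrite H; auto). simpl in H0. lra. Qed.

Lemma Cneg_eq0 x : Cneg x = Czero -> x = Czero.
Proof. intro H. transitivity (Cneg (Cneg x)). ring. rewrite H. ring. Qed.

Lemma back lam k : Csub lam (Cinv lam) <> Czero -> mdet k = Cone ->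
  m12 (F lam k) = Czero -> m21 (F lam k) = Czero ->
  (m12 k = Czero /\ m21 k = Czero) \/ (m11 k = Czero /\ m22 k = Czero).
Proof.
  intros Hnu Hd H1 H2. rewrite F12 in H1. rewrite F21 in H2.
  apply Cneg_eq0 in H1.
  destruct (Cmul_eq0 _ _ H1) as [H1'|]; [|contradiction].
  destruct (Cmul_eq0 _ _ H2) as [H2'|]; [|contradiction].
  destruct k as [a b c d]; unfold mdet in Hd; simpl in *.
  destruct (Cmul_eq0 _ _ H1') as [Ha|Hb]; destruct (Cmul_eq0 _ _ H2') as [Hc|Hdd]; subst.
  - exfalso. apply Cone_neq0. rewrite <- Hd. ring.
  - right; auto.
  - left; auto.
  - exfalso. apply Cone_neq0. rewrite <- Hd. ring.
Qed.

Lemma back2 lam k : Csub lam (Cinv lam) <> Czero -> mdet k = Cone ->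
  Cadd (m11 k) (m22 k) <> Czero ->
  m12 (F lam k) = Czero -> m21 (F lam k) = Czero ->
  m12 k = Czero /\ m21 k = Czero.
Proof.
  intros Hnu Hd Ht H1 H2. destruct (back lam k Hnu Hd H1 H2) as [|[E1 E2]]; auto.
  exfalso; apply Ht; rewrite E1, E2; ring.
Qed.


Fixpoint cpow (x : Cx) (n : nat) : Cx := match n with O => Cone | S m => Cmul x (cpow x m) end.

Lemma cpow_mul x y n : Cmul (cpow x n) (cpow y n) = cpow (Cmul x y) n.
Proof. induction n; simpl. ring. rewrite <- IHn. ring. Qed.
Lemma cpow_one n : cpow Cone n = Cone.
Proof. induction n; simpl; auto. rewrite IHn; ring. Qed.
Lemma Cnorm_cpow x n : Cnorm (cpow x n) = Cnorm x ^ n.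
Proof. induction n; simpl. apply Cnorm_one. rewrite Cnorm_mul, IHn; auto. Qed.

Definition gp lam j := mkM2 (cpow lam j) Czero Czero (cpow (Cinv lam) j).

Lemma gen_gp lam h j : gen (gM lam) h (gp lam j).
Proof.
  induction j.
  - replace (gp lam 0) with mid by (apply M2_eq; reflexivity). apply gen_id.
  - replace (gp lam (S j)) with (mmul (gM lam) (gp lam j)).
    + apply gen_mul; auto. apply gen_g.
    + apply M2_eq; unfold gp, gM; simpl; ring.
Qed.

Definition U1 lam j k := mmul (minv (gp lam j)) (mmul k (gp lam j)).
Definition U2 lam j k := mmul (gp lam j) (mmul k (minv (gp lam j))).

Section T.
Variable lam : Cx.
Hypothesis Hl : Cmul lam (Cinv lam) = Cone.
Lemma LL j : Cmul (cpow lam j) (cpow (Cinv lam) j) = Cone.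
Proof. rewrite cpow_mul, Hl. apply cpow_one. Qed.

Lemma U1_11 j k : m11 (U1 lam j k) = m11 k.
Proof. unfold U1, gp; simpl. transitivity (Cmul (m11 k) (Cmul (cpow lam j) (cpow (Cinv lam) j))). ring. rewrite LL; ring. Qed.
Lemma U1_22 j k : m22 (U1 lam j k) = m22 k.
Proof. unfold U1, gp; simpl. transitivity (Cmul (m22 k) (Cmul (cpow lam j) (cpow (Cinv lam) j))). ring. rewrite LL; ring. Qed.
Lemma U1_12 j k : m12 (U1 lam j k) = Cmul (m12 k) (Cmul (cpow (Cinv lam) j) (cpow (Cinv lam) j)).
Proof. unfold U1, gp; simpl. ring. Qed.
Lemma U1_21 j k : m21 (U1 lam j k) = Cmul (m21 k) (Cmul (cpow lam j) (cpow lam j)).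
Proof. unfold U1, gp; simpl. ring. Qed.
Lemma U2_11 j k : m11 (U2 lam j k) = m11 k.
Proof. unfold U2, gp; simpl. transitivity (Cmul (m11 k) (Cmul (cpow lam j) (cpow (Cinv lam) j))). ring. rewrite LL; ring. Qed.
Lemma U2_22 j k : m22 (U2 lam j k) = m22 k.
Proof. unfold U2, gp; simpl. transitivity (Cmul (m22 k) (Cmul (cpow lam j) (cpow (Cinv lam) j))). ring. rewrite LL; ring. Qed.
Lemma U2_12 j k : m12 (U2 lam j k) = Cmul (m12 k) (Cmul (cpow lam j) (cpow lam j)).
Proof. unfold U2, gp; simpl. ring. Qed.
Lemma U2_21 j k : m21 (U2 lam j k) = Cmul (m21 k) (Cmul (cpow (Cinv lam) j) (cpow (Cinv lam) j)).
Proof. unfold U2, gp; simpl. ring. Qed.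
End T.

Lemma gen_U1 lam h j k : gen (gM lam) h k -> gen (gM lam) h (U1 lam j k).
Proof. intro. unfold U1. apply gen_mul. apply gen_inv, gen_gp. apply gen_mul; auto. apply gen_gp. Qed.
Lemma gen_U2 lam h j k : gen (gM lam) h k -> gen (gM lam) h (U2 lam j k).
Proof. intro. unfold U2. apply gen_mul. apply gen_gp. apply gen_mul; auto. apply gen_inv, gen_gp. Qed.


Lemma unb (L T : R) : 1 < L -> exists n, T < L ^ n.
Proof. intro H. destruct (Pow_x_infinity L) with (b := T + 1) as [N HN].
  rewrite Rabs_right; lra. exists N. specialize (HN N (le_n N)).
  rewrite Rabs_right in HN. lra. apply Rle_ge, pow_le; lra. Qed.

Lemma findj (L t : R) : 1 < L -> 1 <= t -> forall n, t < (L ^ S n) ^ 2 ->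
  exists j, (L ^ j) ^ 2 <= t /\ t < (L ^ S j) ^ 2.
Proof.
  intros HL Ht n. induction n; intro H.
  - exists 0%nat. simpl. lra.
  - destruct (Rlt_le_dec t ((L ^ S n) ^ 2)). apply IHn; auto.
    exists (S n); split; auto.
Qed.

Lemma bal_core (L B C : R) : 1 < L -> 0 < C -> C <= B ->
  exists j, B / L ^ j + C * L ^ j < 2 * L * sqrt (B * C).
Proof.
  intros HL HC HCB.
  destruct (unb L (B / C) HL) as [n Hn].
  assert (Hn2 : B / C < (L ^ S n) ^ 2).
  { assert (1 <= L ^ n) by (apply pow_R1_Rle; lra).
    simpl. set (u := L ^ n) in *. assert (u <= L * u) by nra.
    assert (L * u <= (L*u)*(L*u)) by nra. nra. }
  assert (Ht : 1 <= B / C) by (unfold Rdiv; apply Rmult_le_reg_r with C; [lra|]; rewrite Rmult_assoc, Rinv_l; lra).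
  destruct (findj L (B/C) HL Ht n Hn2) as [j [H1 H2]].
  exists j.
  set (w := L ^ j) in *.
  assert (Hw : 0 < w) by (apply pow_lt; lra).
  replace (L ^ S j) with (L * w) in H2 by reflexivity.
  set (s := sqrt (B * C)).
  assert (Hs : s * s = B * C) by (apply sqrt_sqrt; nra).
  assert (Hs0 : 0 <= s) by apply sqrt_pos.
  assert (HB : 0 < B) by lra.
  set (X := B / w). set (Y := C * w).
  assert (HX : X * w = B) by (unfold X; field; lra).
  assert (H1' : w * w * C <= B).
  { apply (Rmult_le_compat_r C) in H1; [|lra]. unfold Rdiv in H1.
    rewrite Rmult_assoc, Rinv_l in H1 by lra. simpl in H1; nra. }
  assert (H2' : B < L * w * (L * w) * C).
  { apply (Rmult_lt_compat_r C) in H2; [|lra]. unfold Rdiv in H2.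
    rewrite Rmult_assoc, Rinv_l in H2 by lra. simpl in H2; nra. }
  assert (HYX : Y <= X) by (unfold Y; nra).
  assert (HX2 : X * X < (L * s) * (L * s)).
  { replace ((L*s)*(L*s)) with (L*L*(B*C)) by (rewrite <- Hs; ring).
    assert (X * X * (w * w) < L * L * (B * C) * (w * w)).
    { replace (X * X * (w*w)) with (B*B) by (rewrite <- HX; ring). nra. }
    nra. }
  assert (0 <= X) by (unfold X, Rdiv; apply Rmult_le_pos; [lra|apply Rlt_le, Rinv_0_lt_compat; lra]).
  assert (0 <= L * s) by nra.
  assert (X < L * s).
  { destruct (Rlt_le_dec X (L*s)) as [|Hc]; auto.
    assert (L*s*(L*s) <= X * (L*s)) by (apply Rmult_le_compat_r; lra).
    assert (X * (L*s) <= X * X) by (apply Rmult_le_compat_l; lra). lra. }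
  lra.
Qed.

Lemma bal (L B C eta : R) : 1 < L -> 0 <= B -> 0 <= C -> 0 < eta ->
  exists j, (B / L ^ j + C * L ^ j < 2 * L * sqrt (B * C) + eta) \/
            (B * L ^ j + C / L ^ j < 2 * L * sqrt (B * C) + eta).
Proof.
  intros HL HB HC He.
  assert (Hsq : 0 <= 2 * L * sqrt (B * C)) by (apply Rmult_le_pos; [lra|apply sqrt_pos]).
  destruct (Req_dec C 0) as [E|HC'].
  { subst C. destruct (unb L (B / eta) HL) as [n Hn]. exists n. left.
    assert (0 < L ^ n) by (apply pow_lt; lra).
    assert (B / L ^ n < eta).
    { apply Rmult_lt_reg_r with (L ^ n); auto. unfold Rdiv; rewrite Rmult_assoc, Rinv_l by lra.
      apply Rmult_lt_reg_r with (/ eta). apply Rinv_0_lt_compat; lra.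
      replace (eta * L ^ n * / eta) with (L ^ n) by (field; lra). lra. }
    lra. }
  destruct (Req_dec B 0) as [E|HB'].
  { subst B. destruct (unb L (C / eta) HL) as [n Hn]. exists n. right.
    assert (0 < L ^ n) by (apply pow_lt; lra).
    assert (C / L ^ n < eta).
    { apply Rmult_lt_reg_r with (L ^ n); auto. unfold Rdiv; rewrite Rmult_assoc, Rinv_l by lra.
      apply Rmult_lt_reg_r with (/ eta). apply Rinv_0_lt_compat; lra.
      replace (eta * L ^ n * / eta) with (L ^ n) by (field; lra). lra. }
    lra. }
  destruct (Rle_dec C B).
  - destruct (bal_core L B C HL) as [j Hj]; [lra|lra|]. exists j; left; lra.
  - destruct (bal_core L C B HL) as [j Hj]; [lra|lra|]. exists j; right.
    rewrite (Rmult_comm B C). lra.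
Qed.


Fixpoint ks lam h n := match n with O => F lam h | S m => F lam (ks lam h m) end.

Definition DA (A : M2) := (m12 A = Czero /\ m21 A = Czero) \/ (m11 A = Czero /\ m22 A = Czero).

Lemma Cnorm_csub_zero x : Cnorm (Csub Czero x) = Cnorm x.
Proof. replace (Csub Czero x) with (Cneg x) by ring. apply Cnorm_neg. Qed.


Section Jorg.
Variable lam : Cx.
Variable h : M2.
Hypothesis Hl : Cmul lam (Cinv lam) = Cone.
Hypothesis Hdh : mdet h = Cone.
Let nu := Csub lam (Cinv lam).
Let P n := Cmul (m12 (ks lam h n)) (m21 (ks lam h n)).
Let rho n := Cnorm (P n).
Let mu := Cnorm nu * Cnorm nu.

Lemma ks_gen n : gen (gM lam) h (ks lam h n).
Proof. induction n; simpl; unfold F; repeat apply gen_mul; auto using gen_g, gen_h, gen_inv. Qed.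

Lemma ks_det n : mdet (ks lam h n) = Cone.
Proof. induction n; simpl; apply Fdet; auto. Qed.

Lemma ks_tr n : Cadd (m11 (ks lam h n)) (m22 (ks lam h n)) = Cadd lam (Cinv lam).
Proof. destruct n; simpl; apply Ftr; auto using ks_det. Qed.

Lemma rho_step n : rho (S n) <= mu * rho n * (1 + rho n).
Proof.
  unfold rho, P. simpl ks. rewrite Fp by (auto; apply ks_det). fold nu.
  set (p := Cmul (m12 (ks lam h n)) (m21 (ks lam h n))).
  rewrite Cnorm_neg, (Cnorm_mul (Cmul p _)), (Cnorm_mul p), (Cnorm_mul nu).
  assert (Cnorm (Cadd Cone p) <= 1 + Cnorm p) by (rewrite <- Cnorm_one; apply Cnorm_add).
  pose proof (Cnorm_ge0 p). pose proof (Cnorm_ge0 nu). unfold mu.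
  assert (0 <= Cnorm nu * Cnorm nu) by nra.
  assert (0 <= Cnorm p * (Cnorm nu * Cnorm nu)) by nra. nra.
Qed.

Lemma rho_decay (r : R) : r = mu * (1 + rho 0) -> r < 1 -> forall n, rho n <= r ^ n * rho 0.
Proof.
  intros Hr Hr1. assert (0 <= mu) by (unfold mu; pose proof (Cnorm_ge0 nu); nra).
  assert (H0 : 0 <= rho 0) by apply Cnorm_ge0.
  assert (0 <= r) by (rewrite Hr; nra).
  induction n.
  - simpl; lra.
  - pose proof (rho_step n). assert (0 <= rho n) by apply Cnorm_ge0.
    assert (r ^ n <= 1) by (replace 1 with (1 ^ n) by apply pow1; apply pow_incr; lra).
    assert (rho n <= rho 0) by nra.
    assert (0 <= (mu * rho n) * (rho 0 - rho n)) by (apply Rmult_le_pos; [apply Rmult_le_pos|]; lra).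
    assert (mu * rho n * (1 + rho n) <= r * rho n) by (rewrite Hr; nra).
    simpl. nra.
Qed.

Lemma a_close n : Cnorm (Csub lam (m11 (ks lam h (S n)))) = rho n * Cnorm nu.
Proof. simpl ks. rewrite F11 by apply ks_det. fold nu.
  replace (Csub lam (Cadd lam (Cmul (Cmul (m12 (ks lam h n)) (m21 (ks lam h n))) nu)))
    with (Cneg (Cmul (P n) nu)) by (unfold P; ring).
  rewrite Cnorm_neg, Cnorm_mul. reflexivity. Qed.

Lemma d_close n : Cnorm (Csub (Cinv lam) (m22 (ks lam h (S n)))) = rho n * Cnorm nu.
Proof. simpl ks. rewrite F22 by apply ks_det. fold nu.
  replace (Csub (Cinv lam) (Csub (Cinv lam) (Cmul (Cmul (m12 (ks lam h n)) (m21 (ks lam h n))) nu)))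
    with (Cmul (P n) nu) by (unfold P; ring).
  rewrite Cnorm_mul. reflexivity. Qed.

Lemma diag_down (Hnu : nu <> Czero) (Htr : Cadd lam (Cinv lam) <> Czero) m :
  m12 (ks lam h m) = Czero /\ m21 (ks lam h m) = Czero -> DA h.
Proof.
  induction m; simpl; intros [H1 H2].
  - apply (back lam); auto.
  - apply IHm. apply back2 with lam; auto using ks_det. rewrite ks_tr; auto.
Qed.

Lemma lam_nz : 1 < Cnorm lam -> lam <> Czero.
Proof. intros H E. rewrite E, Cnorm_zero in H. lra. Qed.

Lemma norm_LL (Hq : 1 < Cnorm lam) j :
  Cnorm (Cmul (cpow lam j) (cpow lam j)) = (Cnorm lam * Cnorm lam) ^ j.
Proof. rewrite Cnorm_mul, Cnorm_cpow, Rpow_mult_distr. reflexivity. Qed.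

Lemma norm_LiLi (Hq : 1 < Cnorm lam) j :
  Cnorm (Cmul (cpow (Cinv lam) j) (cpow (Cinv lam) j)) = / (Cnorm lam * Cnorm lam) ^ j.
Proof. rewrite Cnorm_mul, Cnorm_cpow, Cnorm_inv by (apply lam_nz; auto).
  rewrite pow_inv, Rpow_mult_distr. assert (Cnorm lam ^ j <> 0) by (apply pow_nonzero; lra). field; auto. Qed.

Lemma jorg : 1 < Cnorm lam -> Cnorm nu < 1 -> mu * (1 + rho 0) < 1 ->
  discrete (gen (gM lam) h) -> DA h.
Proof.
  intros Hq Hnu1 Hr Hdisc.
  set (q := Cnorm lam) in *.
  assert (Hnu : nu <> Czero).
  { intro E. assert (Cmul lam lam = Cone).
    { replace lam with (Cadd nu (Cinv lam)) at 2 by (unfold nu; ring). rewrite E.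
      rewrite <- Hl. ring. }
    assert (q * q = 1) by (unfold q; rewrite <- Cnorm_mul, H; apply Cnorm_one). nra. }
  assert (Htr : Cadd lam (Cinv lam) <> Czero).
  { intro E. assert (Cmul lam lam = Cneg Cone).
    { replace lam with (Csub (Cadd lam (Cinv lam)) (Cinv lam)) at 2 by ring. rewrite E.
      rewrite <- Hl. ring. }
    assert (q * q = 1) by (unfold q; rewrite <- Cnorm_mul, H, Cnorm_neg; apply Cnorm_one). nra. }
  destruct (Hdisc (gM lam) (gen_g _ _)) as [eps [Heps Hiso]].
  set (L := q * q).
  assert (HL : 1 < L) by (unfold L; nra).
  set (t := eps / (8 * L)).
  assert (Ht : 0 < t) by (unfold t; apply Rdiv_lt_0_compat; lra).
  set (delta := Rmin (eps / 4) (t * t)).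
  assert (Hdel : 0 < delta) by (apply Rmin_glb_lt; nra).
  set (r := mu * (1 + rho 0)).
  assert (H0 : 0 <= rho 0) by apply Cnorm_ge0.
  assert (Hmu : 0 <= mu) by (unfold mu; pose proof (Cnorm_ge0 nu); nra).
  assert (Hr0 : 0 <= r) by (unfold r; nra).
  pose proof (rho_decay r eq_refl Hr) as Hdec.
  assert (Hn : exists n, r ^ n * rho 0 < delta).
  { destruct (Req_dec (rho 0) 0) as [E|E].
    - exists 0%nat. rewrite E. lra.
    - destruct (pow_lt_1_zero r) with (y := delta / rho 0) as [N HN].
      rewrite Rabs_right. unfold r; lra. lra. apply Rdiv_lt_0_compat; [lra|]. destruct H0; [auto|congruence].
      exists N. specialize (HN N (le_n N)). rewrite Rabs_right in HN by (apply Rle_ge, pow_le; lra).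
      apply Rmult_lt_compat_r with (r := rho 0) in HN; [|lra].
      replace (delta / rho 0 * rho 0) with delta in HN by (field; lra). lra. }
  destruct Hn as [n Hn].
  assert (Hrn : rho n < delta) by (pose proof (Hdec n); lra).
  assert (HrSn : rho (S n) < delta).
  { pose proof (Hdec (S n)). simpl in H.
    assert (r ^ n <= 1 * r ^ n) by lra.
    assert (0 <= r ^ n) by (apply pow_le; lra).
    assert (Hr1 : r < 1) by (unfold r; lra).
    assert (0 <= (1 - r) * (r ^ n * rho 0)) by (apply Rmult_le_pos; [lra| apply Rmult_le_pos; lra]).
    assert (r * r ^ n * rho 0 <= r ^ n * rho 0) by nra. lra. }
  set (k := ks lam h (S n)).
  apply (diag_down Hnu Htr (S n)). fold k.
  set (B := Cnorm (m12 k)). set (C := Cnorm (m21 k)).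
  assert (HBC : B * C = rho (S n)) by (unfold B, C, rho, P; rewrite Cnorm_mul; reflexivity).
  assert (HB0 : 0 <= B) by apply Cnorm_ge0. assert (HC0 : 0 <= C) by apply Cnorm_ge0.
  assert (Hsq : 2 * L * sqrt (B * C) <= eps / 4).
  { rewrite HBC. assert (sqrt (rho (S n)) <= t).
    { rewrite <- (sqrt_square t) by lra. apply sqrt_le_1_alt.
      pose proof (Rmin_r (eps/4) (t*t)). fold delta in H. lra. }
    unfold t in H. assert (L * (eps / (8 * L)) = eps / 8) by (field; lra).
    nra. }
  assert (Hd4 : delta <= eps / 4) by apply Rmin_l.
  assert (Hac : Cnorm (Csub lam (m11 k)) <= delta).
  { unfold k; rewrite a_close. fold (rho n). pose proof (Cnorm_ge0 nu).
    assert (rho n * Cnorm nu <= rho n * 1) by (apply Rmult_le_compat_l; [apply Cnorm_ge0|lra]). lra. }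
  assert (Hdc : Cnorm (Csub (Cinv lam) (m22 k)) <= delta).
  { unfold k; rewrite d_close. fold (rho n). pose proof (Cnorm_ge0 nu).
    assert (rho n * Cnorm nu <= rho n * 1) by (apply Rmult_le_compat_l; [apply Cnorm_ge0|lra]). lra. }
  assert (Hkg : gen (gM lam) h k) by apply ks_gen.
  assert (HLj : forall j, 0 < L ^ j) by (intro; apply pow_lt; lra).
  destruct (bal L B C (eps / 8) HL HB0 HC0) as [j [Hj|Hj]]; [lra| |].
  - set (U := U1 lam j k).
    assert (HU : U = gM lam).
    { apply Hiso. apply gen_U1; auto.
      unfold mdist, U. change (m11 (gM lam)) with lam. change (m12 (gM lam)) with Czero.
      change (m21 (gM lam)) with Czero. change (m22 (gM lam)) with (Cinv lam).
      rewrite U1_11, U1_22, U1_12, U1_21 by auto.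
      rewrite !Cnorm_csub_zero, (Cnorm_mul (m12 k)), (Cnorm_mul (m21 k)), norm_LL, norm_LiLi by auto. fold q L B C.
      unfold Rdiv in Hj. lra. }
    assert (E1 : m12 U = Czero) by (rewrite HU; reflexivity).
    assert (E2 : m21 U = Czero) by (rewrite HU; reflexivity).
    unfold U in E1, E2. rewrite U1_12 in E1. rewrite U1_21 in E2.
    split.
    + destruct (Cmul_eq0 _ _ E1) as [|E]; auto. exfalso.
      assert (Cnorm (Cmul (cpow (Cinv lam) j) (cpow (Cinv lam) j)) = 0) by (rewrite E; apply Cnorm_zero).
      rewrite norm_LiLi in H by auto. fold q L in H. specialize (HLj j).
      apply (Rinv_neq_0_compat (L ^ j)); lra.
    + destruct (Cmul_eq0 _ _ E2) as [|E]; auto. exfalso.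
      assert (Cnorm (Cmul (cpow lam j) (cpow lam j)) = 0) by (rewrite E; apply Cnorm_zero).
      rewrite norm_LL in H by auto. fold q L in H. specialize (HLj j). lra.
  - set (U := U2 lam j k).
    assert (HU : U = gM lam).
    { apply Hiso. apply gen_U2; auto.
      unfold mdist, U. change (m11 (gM lam)) with lam. change (m12 (gM lam)) with Czero.
      change (m21 (gM lam)) with Czero. change (m22 (gM lam)) with (Cinv lam).
      rewrite U2_11, U2_22, U2_12, U2_21 by auto.
      rewrite !Cnorm_csub_zero, (Cnorm_mul (m12 k)), (Cnorm_mul (m21 k)), norm_LL, norm_LiLi by auto. fold q L B C.
      unfold Rdiv in Hj. lra. }
    assert (E1 : m12 U = Czero) by (rewrite HU; reflexivity).
    assert (E2 : m21 U = Czero) by (rewrite HU; reflexivity).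
    unfold U in E1, E2. rewrite U2_12 in E1. rewrite U2_21 in E2.
    split.
    + destruct (Cmul_eq0 _ _ E1) as [|E]; auto. exfalso.
      assert (Cnorm (Cmul (cpow lam j) (cpow lam j)) = 0) by (rewrite E; apply Cnorm_zero).
      rewrite norm_LL in H by auto. fold q L in H. specialize (HLj j). lra.
    + destruct (Cmul_eq0 _ _ E2) as [|E]; auto. exfalso.
      assert (Cnorm (Cmul (cpow (Cinv lam) j) (cpow (Cinv lam) j)) = 0) by (rewrite E; apply Cnorm_zero).
      rewrite norm_LiLi in H by auto. fold q L in H. specialize (HLj j).
      apply (Rinv_neq_0_compat (L ^ j)); lra.
Qed.
End Jorg.


Lemma DA_gen lam h A : DA h -> gen (gM lam) h A -> DA A.
Proof.
  intros Hh HA. induction HA.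
  - left; split; reflexivity.
  - left; split; reflexivity.
  - auto.
  - destruct IHHA as [[E1 E2]|[E1 E2]]; [left|right]; simpl; rewrite ?E1, ?E2; split; ring.
  - destruct IHHA1 as [[E1 E2]|[E1 E2]]; destruct IHHA2 as [[F1 F2]|[F1 F2]];
      [left|right|right|left]; simpl; rewrite ?E1, ?E2, ?F1, ?F2; split; ring.
Qed.

Lemma elem lam h : DA h -> elementary (gen (gM lam) h).
Proof.
  intro Hh. exists PInf. split; [exact I|]. exists (PInf :: PFin Czero 0 :: nil).
  intros A HA. destruct (DA_gen lam h A Hh HA) as [[E1 E2]|[E1 E2]]; unfold act.
  - rewrite E2. destruct (Req_dec_T (Cnorm2 Czero) 0) as [|n]. left; auto.
    exfalso; apply n; unfold Cnorm2; simpl; ring.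
  - destruct (Req_dec_T (Cnorm2 (m21 A)) 0). left; auto. right; left.
    rewrite E1. f_equal. ring.
Qed.


Lemma key (M x y mu : R) : 0 < M < 1 -> 0 <= mu <= M * M -> 0 <= x -> 0 <= y ->
  y <= 1 + x -> x <= 1 + y ->
  (x <= ((1 - M) / M) * ((1 - M) / M) \/ y <= ((1 - M) / M) * ((1 - M) / M) \/
   x + y <= 2 * (1 - M) / (M * M)) -> mu * (1 + x * y * mu) < 1.
Proof.
  intros HM Hmu Hx Hy Hyx Hxy Hc.
  set (K := ((1 - M) / M) * ((1 - M) / M)) in *.
  assert (HK : K * (M * M) = (1 - M) * (1 - M)) by (unfold K; field; lra).
  assert (HK0 : 0 <= K) by (unfold K; apply Rle_0_sqr).
  assert (Hz : x * y * mu <= K).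
  { destruct Hc as [Hc|[Hc|Hc]].
    - assert (x * y <= K * (1 + K)).
      { apply Rmult_le_compat; lra. }
      assert (x * y * mu <= K * (1 + K) * (M * M)).
      { apply Rmult_le_compat; try lra. apply Rmult_le_pos; lra. }
      assert (K * (1 + K) * (M * M) = K * (M * M + (1 - M) * (1 - M))) by (rewrite <- HK; ring).
      assert (K * (M * M + (1 - M) * (1 - M)) <= K * 1) by (apply Rmult_le_compat_l; nra).
      lra.
    - assert (x * y <= (1 + K) * K).
      { apply Rmult_le_compat; lra. }
      assert (x * y * mu <= (1 + K) * K * (M * M)).
      { apply Rmult_le_compat; try lra. apply Rmult_le_pos; lra. }
      assert ((1 + K) * K * (M * M) = K * (M * M + (1 - M) * (1 - M))) by (rewrite <- HK; ring).
      assert (K * (M * M + (1 - M) * (1 - M)) <= K * 1) by (apply Rmult_le_compat_l; nra).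
      lra.
    - set (S := 2 * (1 - M) / (M * M)) in *.
      assert (HS : S * (M * M) = 2 * (1 - M)) by (unfold S; field; lra).
      assert ((x + y) * (x + y) <= S * S) by (apply Rmult_le_compat; lra).
      assert (4 * (x * y) = (x + y) * (x + y) - (x - y) * (x - y)) by ring.
      assert (0 <= (x - y) * (x - y)) by apply Rle_0_sqr.
      assert (4 * (x * y) <= S * S) by lra.
      assert (x * y * mu <= x * y * (M * M)) by (apply Rmult_le_compat_l; nra).
      assert (4 * (x * y * (M * M)) * (M * M) <= S * S * (M * M) * (M * M)) by
        (apply Rmult_le_compat_r; nra).
      assert (S * S * (M * M) * (M * M) = 4 * (K * (M * M))) by (rewrite HK; nra).
      assert (0 < M * M) by nra.
      assert (x * y * (M * M) * (M * M) <= K * (M * M)) by nra.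
      assert (x * y * (M * M) <= K) by (apply Rmult_le_reg_r with (M * M); lra).
      lra. }
  assert (mu * (1 + x * y * mu) <= M * M * (1 + K)).
  { apply Rmult_le_compat; try lra. assert (0 <= x * y * mu) by (repeat apply Rmult_le_pos; lra). lra. }
  nra.
Qed.

Theorem mainTheorem3 (lam a b c d : Cx) :
  1 < Cnorm lam ->
  mdet (mkM2 a b c d) = Cone ->
  let g := mkM2 lam Czero Czero (Cinv lam) in
  let h := mkM2 a b c d in
  let Mg := Cnorm (Csub lam Cone) + Cnorm (Csub (Cinv lam) Cone) in
  Mg < 1 ->
  discrete (gen g h) ->
  ~ elementary (gen g h) ->
  sqrt (Cnorm (Cmul b c)) > (1 - Mg) / Mg /\
  sqrt (Cnorm (Cadd Cone (Cmul b c))) > (1 - Mg) / Mg /\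
  Cnorm (Cadd Cone (Cmul b c)) + Cnorm (Cmul b c) > 2 * (1 - Mg) / (Mg * Mg).
Proof.
  intros Hq Hdet g h M HM Hdisc Hnel.
  assert (Hl : Cmul lam (Cinv lam) = Cone) by (apply Cmul_inv, lam_nz; auto).
  set (nu := Csub lam (Cinv lam)).
  assert (Hnu : Cnorm nu <= M).
  { unfold nu, M. replace (Csub lam (Cinv lam)) with (Csub (Csub lam Cone) (Csub (Cinv lam) Cone)) by ring.
    apply Cnorm_sub. }
  assert (Hnz : nu <> Czero).
  { intro E. assert (Cmul lam lam = Cone).
    { replace lam with (Cadd nu (Cinv lam)) at 2 by (unfold nu; ring). rewrite E.
      rewrite <- Hl. ring. }
    assert (Cnorm lam * Cnorm lam = 1) by (rewrite <- Cnorm_mul, H; apply Cnorm_one). nra. }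
  pose proof (Cnorm_pos nu Hnz) as Hnup.
  assert (HM0 : 0 < M < 1) by lra.
  set (x := Cnorm (Cmul b c)). set (y := Cnorm (Cadd Cone (Cmul b c))).
  assert (Hx : 0 <= x) by apply Cnorm_ge0. assert (Hy : 0 <= y) by apply Cnorm_ge0.
  assert (Hyx : y <= 1 + x) by (unfold y, x; rewrite <- Cnorm_one; apply Cnorm_add).
  assert (Hxy : x <= 1 + y).
  { unfold x, y. replace (Cmul b c) with (Csub (Cadd Cone (Cmul b c)) Cone) at 1 by ring.
    pose proof (Cnorm_sub (Cadd Cone (Cmul b c)) Cone) as HH. rewrite Cnorm_one in HH. lra. }
  assert (Hmu : 0 <= Cnorm nu * Cnorm nu <= M * M) by (split; nra).
  assert (Hcontra : (x <= ((1 - M) / M) * ((1 - M) / M) \/ y <= ((1 - M) / M) * ((1 - M) / M) \/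
     x + y <= 2 * (1 - M) / (M * M)) -> False).
  { intro Hc. apply Hnel. apply elem with (lam := lam). apply (jorg lam h Hl Hdet); [auto | fold nu; lra | | auto].
    change (ks lam h 0) with (F lam h). rewrite (Fp lam h Hdet).
    change (m12 h) with b. change (m21 h) with c. fold nu.
    rewrite Cnorm_neg, (Cnorm_mul (Cmul _ _) (Cmul nu nu)), (Cnorm_mul nu nu), (Cnorm_mul (Cmul b c)).
    fold x y.
    apply key with M; auto. }
  assert (HK : 0 < (1 - M) / M) by (apply Rdiv_lt_0_compat; lra).
  split; [|split].
  - destruct (Rlt_le_dec ((1 - M) / M) (sqrt x)) as [|Hs]; auto. exfalso. apply Hcontra. left.
    rewrite <- (sqrt_sqrt x) by auto. apply Rmult_le_compat; auto using sqrt_pos.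
  - destruct (Rlt_le_dec ((1 - M) / M) (sqrt y)) as [|Hs]; auto. exfalso. apply Hcontra. right; left.
    rewrite <- (sqrt_sqrt y) by auto. apply Rmult_le_compat; auto using sqrt_pos.
  - destruct (Rlt_le_dec (2 * (1 - M) / (M * M)) (y + x)) as [|Hs]; auto. exfalso. apply Hcontra. right; right. lra.
Qed.
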